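(* Let $\mathbf{K}_{\mathbf{x}\mathbf{x}}\in\mathbb{R}^{K\times K}$ be a (symmetric positive semidefinite) covariance matrix. For any $d>0$ and any full-rank $\mathbf{A}\in\mathbb{Z}^{K\times K}$ with rows $\mathbf{a}_1^T,\ldots,\mathbf{a}_K^T$, $$\frac{1}{2}\log_2\Big(\max_{k=1,\ldots,K}\mathbf{a}_k^T\big(\mathbf{I}+\tfrac1d\mathbf{K}_{\mathbf{x}\mathbf{x}}\big)\mathbf{a}_k\Big)\ \ge\ \frac{1}{2K}\log_2\Big|\det\big(\mathbf{I}+\tfrac1d\mathbf{K}_{\mathbf{x}\mathbf{x}}\big)\Big|.$$ In particular, $R_{\text{IF}}(d)\ge R^{\text{BT}}_{\text{bench}}(d)$, where $R_{\text{IF}}(d)$ is the minimum of the left-hand side over full-rank integer $\mathbf{A}$ and $R^{\text{BT}}_{\text{bench}}(d)$ is the right-hand side. *)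

(* Defs.v *)
From HB Require Import structures.
From mathcomp Require Import all_boot all_order all_algebra.
From mathcomp Require Import reals exp.
Set Implicit Arguments. Unset Strict Implicit. Unset Printing Implicit Defensive.
Import Order.TTheory GRing.Theory Num.Theory.
Local Open Scope ring_scope.

Definition log2 {R : realType} (x : R) : R := ln x / ln 2.

Definition psd {R : realType} (K : nat) (M : 'M[R]_K) : Prop :=
  M^T = M /\ forall v : 'rV[R]_K, 0 <= (v *m M *m v^T) 0 0.

Definition intmx {R : realType} (K : nat) (A : 'M[int]_K) : 'M[R]_K :=
  map_mx (fun z : int => z%:~R) A.

Definition quadrow {R : realType} (K : nat) (A : 'M[int]_K) (M : 'M[R]_K)
  (k : 'I_K) : R :=
  (row k (intmx A) *m M *m (row k (intmx A))^T) 0 0.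

(* Main.v *)
Set Warnings "-notation-overridden,-ambiguous-paths,-notation-incompatible-prefix".
Require Import Defs.
From HB Require Import structures.
From mathcomp Require Import all_boot all_order all_algebra.
From mathcomp Require Import reals exp.
From mathcomp Require Import ring lra.
Import Order.TTheory GRing.Theory Num.Theory.
Local Open Scope ring_scope.

Lemma quad_delta (F : comNzRingType) n (G : 'M[F]_n) (i : 'I_n) :
  (delta_mx (0:'I_1) i *m G *m (delta_mx (0:'I_1) i)^T) 0 0 = G i i.
Proof. by rewrite trmx_delta -rowE -colE !mxE. Qed.

Lemma delta_neq0 (F : comNzRingType) n (i : 'I_n) : (delta_mx 0 i : 'rV[F]_n) != 0.
Proof. by apply/negP => /eqP/matrixP/(_ 0 i); rewrite !mxE !eqxx /= => /eqP; rewrite oner_eq0. Qed.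

Lemma hadamard (F : realFieldType) n (G : 'M[F]_n) :
  G^T = G -> (forall v : 'rV_n, v != 0 -> 0 < (v *m G *m v^T) 0 0) ->
  0 < \det G /\ \det G <= \prod_i G i i.
Proof.
elim: n G => [|n IH] G sym pd.
  by rewrite det_mx00 big_ord0 ltr01 lexx.
move: G sym pd; rewrite -[n.+1]/(1+n)%N => G sym pd.
have symE x y : G x y = G y x.
  by have := congr1 (fun M : 'M_(1+n) => M y x) sym; rewrite mxE.
set i0 : 'I_(1+n) := lshift n 0.
set a := G i0 i0.
set b := ursubmx G.
set C := drsubmx G.
have a_gt0 : 0 < a by rewrite /a -quad_delta; apply: pd; apply: delta_neq0.
have ul : ulsubmx G = a%:M.
  by rewrite [LHS]mx11_scalar !mxE.
have dl : dlsubmx G = b^T.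
  by apply/matrixP => i j; rewrite !mxE symE ord1.
set S := C - a^-1 *: (b^T *m b).
set U : 'M[F]_(1+n) := block_mx 1%:M (- a^-1 *: b) 0 1%:M.
have key : U^T *m G *m U = block_mx a%:M 0 0 S.
  rewrite -[G]submxK ul dl /U tr_block_mx !mulmx_block -/b -/C.
  have an0 : a != 0 by rewrite gt_eqF.
  rewrite ?trmx1 ?trmx0 ?mul1mx ?mul0mx ?mulmx1 ?mulmx0 ?addr0 ?add0r.
  have e1 : a%:M *m (- a^-1 *: b) + b = 0.
    by rewrite mul_scalar_mx scalerA mulrN mulfV // scaleN1r addNr.
  have e2 : (- a^-1 *: b)^T *m a%:M + b^T = 0.
    by rewrite mul_mx_scalar linearZ /= scalerA mulrN mulfV // scaleN1r addNr.
  rewrite e1 e2 mul0mx add0r linearZ /= -scalemxAl scaleNr addrC.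
  done.
have detU : \det U = 1 by rewrite /U det_ublock !det1 mulr1.
have detG : \det G = a * \det S.
  have := congr1 determinant key.
  by rewrite !det_mulmx det_tr detU mulr1 mul1r det_ublock det_scalar1.
have Spd : forall w : 'rV_n, w != 0 -> 0 < (w *m S *m w^T) 0 0.
  move=> w wn0.
  pose v := row_mx 0 w *m U^T.
  have vn0 : v != 0.
    apply: contra wn0 => /eqP v0.
    move: v0; rewrite /v /U tr_block_mx mul_row_block => /eqP.
    rewrite -[0 : 'rV_(1+n)]hsubmxK => /eqP/eq_row_mx [_]; rewrite trmx1 mulmx1 mul0mx add0r => ->; by rewrite linear0.
  have := pd v vn0.
  rewrite /v trmx_mul trmxK !mulmxA -(mulmxA _ U^T) -(mulmxA _ (U^T *m G)) key.
  by rewrite mul_row_block tr_row_mx mul_row_col !mulmx0 !mul0mx !add0r trmx0 mulmx0 add0r.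
have Csym : C^T = C by apply/matrixP => i j; rewrite !mxE symE.
have Ssym : S^T = S.
  by rewrite /S linearB /= linearZ /= trmx_mul trmxK Csym.
have [dS1 dS2] := IH S Ssym Spd.
have Sdiag i : 0 <= S i i <= C i i.
  rewrite (ltW (_ : 0 < S i i)) /=; last by rewrite -quad_delta; apply: Spd; apply: delta_neq0.
  rewrite /S !mxE big_ord1 !mxE gerBl mulr_ge0 ?invr_ge0 ?(ltW a_gt0) //.
  by rewrite -expr2 sqr_ge0.
rewrite detG; split; first exact: mulr_gt0.
rewrite big_split_ord big_ord1 /= -/i0 -/a ler_pM2l //.
apply: (le_trans dS2); apply: ler_prod => i _.
by have := Sdiag i; rewrite [C i i]mxE [dsubmx G _ _]mxE.
Qed.

Theorem lemma2 (R : realType) (K : nat) (Kxx : 'M[R]_K) (d : R)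
  (A : 'M[int]_K) :
  (0 < K)%N -> psd Kxx -> 0 < d -> \det A != 0 ->
  (1 / 2) * log2 (\big[Num.max/0]_(k < K)
                    quadrow A (1%:M + d^-1 *: Kxx) k)
  >= (1 / (2 * K%:R)) * log2 `|\det (1%:M + d^-1 *: Kxx)|.
Proof.
move=> K0 [Ksym Kpsd] d0 detA.
set M := 1%:M + d^-1 *: Kxx.
set B : 'M[R]_K := intmx A.
have Msym : M^T = M by rewrite /M linearD /= linearZ /= trmx1 Ksym.
have Mpd : forall w : 'rV_K, w != 0 -> 0 < (w *m M *m w^T) 0 0.
  move=> w wn0.
  have [j wj] : exists j, w 0 j != 0.
    case: (pickP (fun j => w 0 j != 0)) => [j wj | h]; first by exists j.
    move: wn0; have -> : w = 0; last by rewrite eqxx.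
    apply/matrixP => i j; rewrite ord1 mxE; by have := h j => /negbFE/eqP.
  rewrite /M mulmxDr mulmx1 mulmxDl mxE -scalemxAr -scalemxAl.
  have h2 : 0 <= (d^-1 *: (w *m Kxx *m w^T)) 0 0 by rewrite mxE mulr_ge0 ?invr_ge0 ?(ltW d0).
  have h1 : 0 < (w *m w^T) 0 0.
    rewrite mxE (bigD1 j) //= mxE.
    have : 0 < w 0 j * w 0 j by rewrite -expr2 exprn_even_gt0.
    have : 0 <= \sum_(i < K | i != j) w 0 i * w^T i 0.
      by apply: sumr_ge0 => i _; rewrite mxE -expr2 sqr_ge0.
    move=> h3 h4; exact: ltr_wpDr h3 h4.
  exact: ltr_wpDr h2 h1.
have detB : \det B = (\det A)%:~R by rewrite /B /intmx -det_map_mx.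
have detBn0 : \det B != 0 by rewrite detB intr_eq0.
have Bunit : B \in unitmx by rewrite unitmxE unitfE.
have detB2 : 1 <= \det B ^+ 2 by apply: sqr_intr_ge1 => //; rewrite detB intr_int.
set G := B *m M *m B^T.
have Gsym : G^T = G by rewrite /G !trmx_mul trmxK Msym mulmxA.
have Gpd : forall v : 'rV_K, v != 0 -> 0 < (v *m G *m v^T) 0 0.
  move=> v vn0.
  have -> : v *m G *m v^T = (v *m B) *m M *m (v *m B)^T.
    by rewrite /G trmx_mul !mulmxA.
  apply: Mpd; apply: contra vn0 => /eqP vB0.
  by rewrite -(mulmxK Bunit v) vB0 mul0mx.
have [dG1 dG2] := @hadamard R K G Gsym Gpd.
have detGE : \det G = \det B ^+ 2 * \det M.
  by rewrite /G !det_mulmx det_tr expr2 mulrAC.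
have dM0 : 0 < \det M.
  by move: dG1; rewrite detGE pmulr_rgt0 // (lt_le_trans ltr01 detB2).
have Gq i : G i i = quadrow A M i.
  by rewrite -quad_delta /quadrow -/B rowE trmx_mul /G !mulmxA.
set m := \big[Num.max/0]_(k < K) quadrow A M k.
have Gm i : 0 <= G i i <= m.
  rewrite -{1}quad_delta ltW ?Gpd ?delta_neq0 //= Gq.
  by rewrite /m (bigD1 i) //= le_max lexx.
have m0 : 0 < m.
  apply: (lt_le_trans (_ : 0 < G (Ordinal K0) (Ordinal K0))).
    by rewrite -quad_delta Gpd ?delta_neq0.
  by case/andP: (Gm (Ordinal K0)).
have dMm : \det M <= m ^+ K.
  apply: (le_trans (_ : _ <= \det G)).
    by rewrite detGE ler_peMl // ltW.
  apply: (le_trans dG2).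
  apply: (@le_trans _ _ (\prod_(i < K) m)); first exact: ler_prod (fun i _ => Gm i).
  by rewrite prodr_const card_ord.
have hln : ln (\det M) <= K%:R * ln m.
  by rewrite mulr_natl -lnXn // ler_ln ?posrE ?exprn_gt0.
have l2 : 0 < ln (2 : R) by apply: ln_gt0; rewrite ltr1n.
have K0' : 0 < K%:R :> R by rewrite ltr0n.
rewrite ger0_norm; last exact: ltW dM0.
rewrite /log2 -subr_ge0.
have -> : 1 / 2 * (ln m / ln 2) - 1 / (2 * K%:R) * (ln (\det M) / ln 2)
   = (K%:R * ln m - ln (\det M)) / (2 * K%:R * ln 2).
  by field; rewrite ?gt_eqF.
by rewrite divr_ge0 ?subr_ge0 // ltW // !mulr_gt0.
Qed.
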